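(* (1) $\mathrm{Pr}(\mathrm{Fig}(T^\phi)\setminus\{T\})=m_T\setminus(\mathcal S_1\cup\{T^\phi\})$. (2) $\mathrm{Pr}(\mathrm{Fig}(T^{\phi^2})\setminus\{T\})=m_T\setminus(\mathcal S_1\cup\{T^{\phi^2}\})$.
   Context: Let $q$ be a prime power, $\mathbb{F}_{q^3}^*=\mathbb{F}_{q^3}\setminus\{0\}$. Points of $\mathrm{PG}(2,q^3)$ have homogeneous coordinates $(x,y,z)$ and lines $[a,b,c]$. Let $\phi$ be the collineation $(x,y,z)\mapsto(z^q,x^q,y^q)$ (on lines $[d,e,f]\mapsto[f^q,d^q,e^q]$). A point has Type II (resp. III) if its $\phi$-orbit is three collinear (resp. non-collinear) points; a line has Type III if its $\phi$-orbit is three non-concurrent lines. For a Type III point $X$, the Fig-block is $\mathrm{Fig}(X)=\mathcal E_X\cup\mathcal F_X$, where $\mathcal E_X$ is the set of Type II points on the line $X^\phi X^{\phi^2}$ and $\mathcal F_X=\{\ell^\phi\cap\ell^{\phi^2}:\ell\text{ a Type III line through }X\}$. Let $T=(0,0,1)$, $T^\phi=(1,0,0)$, $T^{\phi^2}=(0,1,0)$ (all Type III), and $m_T=T^\phi T^{\phi^2}$ the line $[0,0,1]$. For a point $P\neq T$, $\mathrm{Pr}(P)=TP\cap m_T$, applied elementwise to sets of points not containing $T$. Let $\mathcal S_1=\{(x,x^q,0):x\in\mathbb{F}_{q^3}^*\}\subset m_T$. *)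

(* Defs.v *)
From HB Require Import structures.
From mathcomp Require Import all_boot all_order all_algebra all_field.
Set Implicit Arguments. Unset Strict Implicit. Unset Printing Implicit Defensive.
Import GRing.Theory.
Local Open Scope ring_scope.

Section PG.
Variable F : fieldType.

(* homogeneous coordinates (x,y,z) of points, or [a,b,c] of lines *)
Definition trip := (F * F * F)%type.
Definition tx (u : trip) := u.1.1.
Definition ty (u : trip) := u.1.2.
Definition tz (u : trip) := u.2.

Definition nz (u : trip) : Prop := u <> (0, 0, 0).
Definition smul (c : F) (u : trip) : trip := (c * tx u, c * ty u, c * tz u).

Definition peq (u v : trip) : Prop :=
  nz u /\ nz v /\ exists c : F, c != 0 /\ v = smul c u.

Definition incid (P l : trip) : Prop :=
  tx l * tx P + ty l * ty P + tz l * tz P = 0.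

(* the collineation phi : (x,y,z) |-> (z^q,x^q,y^q); the same formula gives
   its action on lines [d,e,f] |-> [f^q,d^q,e^q] *)
Definition phi (q : nat) (u : trip) : trip := (tz u ^+ q, tx u ^+ q, ty u ^+ q).

Definition collinear3 (A B C : trip) : Prop :=
  exists l, nz l /\ incid A l /\ incid B l /\ incid C l.
Definition concurrent3 (l m n : trip) : Prop :=
  exists P, nz P /\ incid P l /\ incid P m /\ incid P n.

Definition typeII (q : nat) (X : trip) : Prop :=
  nz X /\ ~ peq X (phi q X) /\ ~ peq (phi q X) (phi q (phi q X))
  /\ ~ peq X (phi q (phi q X)) /\ collinear3 X (phi q X) (phi q (phi q X)).
Definition typeIII (q : nat) (X : trip) : Prop :=
  nz X /\ ~ collinear3 X (phi q X) (phi q (phi q X)).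
Definition typeIIIline (q : nat) (l : trip) : Prop :=
  nz l /\ ~ concurrent3 l (phi q l) (phi q (phi q l)).

Definition EX (q : nat) (X P : trip) : Prop :=
  typeII q P /\ exists l, nz l /\ incid (phi q X) l /\ incid (phi q (phi q X)) l
                           /\ incid P l.
Definition FX (q : nat) (X P : trip) : Prop :=
  nz P /\ exists l, typeIIIline q l /\ incid X l
                    /\ incid P (phi q l) /\ incid P (phi q (phi q l)).
Definition Fig (q : nat) (X P : trip) : Prop := EX q X P \/ FX q X P.

Definition T : trip := (0, 0, 1).
Definition mT : trip := (0, 0, 1). (* the line [0,0,1] = T^phi T^phi^2 *)

(* Q is the point Pr(P) = TP /\ m_T  (for P <> T) *)
Definition Pr (P Q : trip) : Prop :=
  nz Q /\ incid Q mT /\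
  exists l, nz l /\ incid T l /\ incid P l /\ incid Q l.

Definition S1 (q : nat) (Q : trip) : Prop :=
  exists x : F, x != 0 /\ peq Q (x, x ^+ q, 0).

Definition PrFigMinusT (q : nat) (X Q : trip) : Prop :=
  exists P, Fig q X P /\ ~ peq P T /\ Pr P Q.

Definition mTminus (q : nat) (Y Q : trip) : Prop :=
  nz Q /\ incid Q mT /\ ~ S1 q Q /\ ~ peq Q Y.

End PG.

(* Main.v *)
Require Import Defs.
From HB Require Import structures.
From mathcomp Require Import all_boot all_order all_algebra all_field.
Local Open Scope ring_scope.
From mathcomp Require Import zify ring cyclic.
Set Implicit Arguments. Unset Strict Implicit. Unset Printing Implicit Defensive.
Import GRing.Theory.

Section Alg.
Variable F : finFieldType.
Variable q : nat.
Hypothesis Hq : (1 < q)%N.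
Hypothesis card : #|F| = (q * q * q)%N.

Lemma prim_exists : exists z : F, (#|F|.-1).-primitive_root z.
Proof.
have n_gt0 : (0 < #|F|.-1)%N by case: #|F| (finNzRing_gt1 F) => [|[|n]].
have [||z _ hz] := hasP (@has_prim_root F _ (enum [pred x : F | x != 0]) n_gt0 _ (enum_uniq _) _).
- apply/allP => x; rewrite mem_enum inE => nzx; rewrite unity_rootE; apply/eqP.
  apply: (mulIf nzx); rewrite mul1r -exprSr prednK ?expf_card //.
  by case: #|F| (finNzRing_gt1 F).
- by rewrite -cardE (@cardC1 F 0).
by exists z.
Qed.

Lemma H90 (e : F) : e * e ^+ q * (e ^+ q) ^+ q = 1 ->
  exists s : F, s != 0 /\ s ^+ q = e * s.
Proof.
move=> Ne.
have [z hz] := prim_exists.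
have enz : e != 0.
  apply/eqP => e0; move: Ne; rewrite e0 mul0r mul0r => /eqP; by rewrite eq_sym oner_eq0.
have eF : e ^+ #|F|.-1 = 1.
  apply: (mulIf enz); rewrite mul1r -exprSr prednK ?expf_card //.
  by case: #|F| (finNzRing_gt1 F).
have [[i _] /= ei] := prim_rootP hz eF.
set m := (1 + q + q * q)%N.
have em : e ^+ m = 1 by rewrite /m !exprD expr1 exprM.
have : (#|F|.-1 %| i * m)%N.
  by rewrite (prim_order_dvd hz) exprM -ei em.
have -> : #|F|.-1 = (q.-1 * m)%N.
  rewrite card /m; case: q Hq => [|r] // _ /=; nia.
rewrite dvdn_pmul2r ?/m // => dv.
have z0 : z != 0.
  apply/eqP => z0; move: (prim_expr_order hz); rewrite z0 expr0n.
  by case: (#|F|.-1) (prim_order_gt0 hz) => // n _ /eqP; rewrite eq_sym oner_eq0.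
exists (z ^+ (i %/ q.-1)); split; first by rewrite expf_neq0.
rewrite -exprM.
have -> : ((i %/ q.-1) * q = (i %/ q.-1) * q.-1 + i %/ q.-1)%N.
  by case: (q) Hq => //= r _; rewrite mulnS addnC.
by rewrite exprD divnK // -ei.
Qed.
Hypothesis frD : forall x y : F, (x + y) ^+ q = x ^+ q + y ^+ q.
Hypothesis frN : forall x : F, (- x) ^+ q = - (x ^+ q).
Hypothesis fr3 : forall x : F, ((x ^+ q) ^+ q) ^+ q = x.

Lemma fr0 : (0 : F) ^+ q = 0. Proof. by rewrite expr0n; case: q Hq. Qed.
Lemma fr1 : (1 : F) ^+ q = 1. Proof. exact: expr1n. Qed.

Lemma nz3 (a b c : F) : nz (a, b, c) <-> (a != 0) || (b != 0) || (c != 0).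
Proof.
split => [h|].
  case: (a =P 0) => [ea|//]; case: (b =P 0) => [eb|//]; case: (c =P 0) => [ec|//].
  by case: h; rewrite ea eb ec.
by move=> h [] ha hb hc; rewrite ha hb hc eqxx in h.
Qed.

Lemma PrL (x y z u v w : F) : nz (x, y, z) -> ~ peq (x, y, z) (T F) ->
  Pr (x, y, z) (u, v, w) ->
  [/\ w = 0, (x != 0) || (y != 0), (u != 0) || (v != 0) & x * v = y * u].
Proof.
move=> nzP nT [nzQ [iQ [[[l1 l2] l3] [nzl [iT [iP iQl]]]]]].
move: iQ iT iP iQl; rewrite /incid /mT /T /tx /ty /tz /=.
rewrite !mul0r !add0r mul1r => w0; rewrite !mulr0 !add0r mulr1 => l30.
subst w l3; rewrite !mul0r !addr0 => eP eQ.
have xy : (x != 0) || (y != 0).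
  case: (x =P 0) => [x0|//]; case: (y =P 0) => [y0|//] /=.
  subst x y; case: nT; split => //; split.
    by case=> /eqP; rewrite oner_eq0.
  have z0 : z != 0 by move/nz3: nzP; rewrite eqxx.
  exists z^-1; split; first by rewrite invr_eq0.
  by rewrite /smul /tx /ty /tz /= !mulr0 mulVf.
have uv : (u != 0) || (v != 0).
  by move/nz3: nzQ; rewrite eqxx orbF.
split => //.
apply/eqP; rewrite -subr_eq0; apply/eqP.
have [l10|l1n] := eqVneq l1 0.
  have l2n : l2 != 0 by move/nz3: nzl; rewrite l10 eqxx /= orbF.
  apply: (mulfI l2n); rewrite mulr0.
  transitivity (- u * (l1 * x + l2 * y) + x * (l1 * u + l2 * v)); first by rewrite l10; ring.
  by rewrite eP eQ; ring.
apply: (mulfI l1n); rewrite mulr0.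
transitivity (v * (l1 * x + l2 * y) - y * (l1 * u + l2 * v)); first by ring.
by rewrite eP eQ; ring.
Qed.

Lemma phiE (a b c : F) : phi q (a, b, c) = (c ^+ q, a ^+ q, b ^+ q).
Proof. by []. Qed.

Lemma fin1 (x y u v : F) : nz (u, v, 0) -> v != 0 -> x * v = y * u ->
  (forall t : F, t != 0 -> x * t ^+ q = y * t -> False) ->
  mTminus q (1, 0, 0) (u, v, 0).
Proof.
move=> nzQ vn xv ht; split => //; split.
  by rewrite /incid /mT /tx /ty /tz /=; ring.
split.
  case=> t [tn [_ [_ [c [cn]]]]]; rewrite /smul /tx /ty /tz /= => -[et et1 _].
  by apply: (ht t tn); rewrite et1 et mulrCA xv mulrCA.
case=> _ [_ [c [cn]]]; rewrite /smul /tx /ty /tz /= => -[_ e _].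
by move/eqP: e; rewrite eq_sym mulf_eq0 (negbTE cn) (negbTE vn).
Qed.

Lemma fin2 (x y u v : F) : nz (u, v, 0) -> u != 0 -> x * v = y * u ->
  (forall t : F, t != 0 -> x * t ^+ q = y * t -> False) ->
  mTminus q (0, 1, 0) (u, v, 0).
Proof.
move=> nzQ un xv ht; split => //; split.
  by rewrite /incid /mT /tx /ty /tz /=; ring.
split.
  case=> t [tn [_ [_ [c [cn]]]]]; rewrite /smul /tx /ty /tz /= => -[et et1 _].
  by apply: (ht t tn); rewrite et1 et mulrCA xv mulrCA.
case=> _ [_ [c [cn]]]; rewrite /smul /tx /ty /tz /= => -[e _ _].
by move/eqP: e; rewrite eq_sym mulf_eq0 (negbTE cn) (negbTE un).
Qed.

Lemma part1_fwd Q : PrFigMinusT q (phi q (T F)) Q -> mTminus q (phi q (T F)) Q.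
Proof.
have -> : phi q (T F) = (1, 0, 0) by rewrite /T phiE fr0 fr1.
case: Q => [[u v] w] [[[x y] z] [HF [nT HPr]]].
have nzP : nz (x, y, z) by case: HF => [[[]]|[]].
have [w0 xy uv xv] := PrL nzP nT HPr; subst w.
have nzQ : nz (u, v, 0) by case: HPr.
case: HF => [[_ [[[l1 l2] l3] [nzl [i1 [i2 i3]]]]] | [_ [[[b0 b] c] [[nzl nc] [iX [i1 i2]]]]]].
- move: i1 i2 i3; rewrite !phiE !fr0 !fr1 /incid /tx /ty /tz /=.
  rewrite ?mulr0 ?mul0r ?addr0 ?add0r ?mulr1 => l20 l30; subst l2 l3.
  rewrite ?mul0r ?addr0 => e.
  have l1n : l1 != 0 by move/nz3: nzl; rewrite eqxx !orbF.
  have x0 : x = 0 by move/eqP: e; rewrite mulf_eq0 (negbTE l1n) => /eqP.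
  subst x; rewrite eqxx /= in xy.
  have u0 : u = 0 by move/esym/eqP: xv; rewrite mul0r mulf_eq0 (negbTE xy) => /eqP.
  subst u; rewrite eqxx /= in uv.
  apply: (@fin1 0 y 0 v nzQ uv xv) => t tn.
  by move/esym/eqP; rewrite mul0r mulf_eq0 (negbTE xy) (negbTE tn).
- move: iX; rewrite /incid /tx /ty /tz /= ?mulr0 ?addr0 mulr1 => b00; subst b0.
  move: i1 i2 nc; rewrite !phiE !fr0 /incid /tx /ty /tz /=.
  rewrite ?mul0r ?addr0 => i1 i2 nc.
  have yn : y != 0.
    apply/eqP => y0; subst y; rewrite eqxx orbF in xy.
    move/eqP: i2; rewrite mulr0 addr0 mulf_eq0 (negbTE xy) orbF !expf_eq0 => /andP[_ /andP[_ /eqP b0]].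
    subst b; move/eqP: i1; rewrite fr0 mul0r addr0.
    have cn : c != 0 by move/nz3: nzl; rewrite !eqxx.
    by rewrite mulf_eq0 (negbTE xy) orbF !expf_eq0 (negbTE cn) !andbF.
  have vn : v != 0.
    apply/eqP => v0; subst v; rewrite eqxx orbF in uv.
    by move/eqP: xv; rewrite mulr0 eq_sym mulf_eq0 (negbTE yn) (negbTE uv).
  apply: (fin1 nzQ vn xv) => t tn xt.
  have E1 : b ^+ q ^+ q * t + c ^+ q ^+ q * t ^+ q = 0.
    apply: (mulfI yn); rewrite mulr0.
    transitivity (b ^+ q ^+ q * (y * t) + c ^+ q ^+ q * y * t ^+ q); first by ring.
    rewrite -xt; transitivity ((b ^+ q ^+ q * x + c ^+ q ^+ q * y) * t ^+ q); first by ring.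
    by rewrite i2 mul0r.
  have E2 : b * t ^+ q + c * t ^+ q ^+ q = 0.
    by move: (congr1 (fun a => a ^+ q) E1); rewrite frD !exprMn !fr3 fr0.
  have E3 : b ^+ q * t ^+ q ^+ q + c ^+ q * t = 0.
    by move: (congr1 (fun a => a ^+ q) E2); rewrite frD !exprMn !fr3 fr0.
  apply: nc; exists (t, t ^+ q, t ^+ q ^+ q); split.
    by apply/nz3; rewrite tn.
rewrite /incid /tx /ty /tz /=.   split; first by apply: (eq_trans _ E2); ring.
  split; first by apply: (eq_trans _ E3); ring.
  by apply: (eq_trans _ E1); ring.
Qed.

Lemma part2_fwd Q : PrFigMinusT q (phi q (phi q (T F))) Q ->
  mTminus q (phi q (phi q (T F))) Q.
Proof.
have -> : phi q (phi q (T F)) = (0, 1, 0) by rewrite /T !phiE !fr0 !fr1.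
case: Q => [[u v] w] [[[x y] z] [HF [nT HPr]]].
have nzP : nz (x, y, z) by case: HF => [[[]]|[]].
have [w0 xy uv xv] := PrL nzP nT HPr; subst w.
have nzQ : nz (u, v, 0) by case: HPr.
case: HF => [[_ [[[l1 l2] l3] [nzl [i1 [i2 i3]]]]] | [_ [[[a b0] c] [[nzl nc] [iX [i1 i2]]]]]].
- move: i1 i2 i3; rewrite !phiE !fr0 !fr1 /incid /tx /ty /tz /=.
  rewrite ?mulr0 ?mul0r ?addr0 ?add0r ?mulr1 => l30 l10; subst l1 l3.
  rewrite ?mul0r ?addr0 ?add0r => e.
  have l2n : l2 != 0 by move/nz3: nzl; rewrite eqxx /= orbF.
  have y0 : y = 0 by move/eqP: e; rewrite mulf_eq0 (negbTE l2n) => /eqP.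
  subst y; rewrite eqxx orbF in xy.
  have v0 : v = 0 by move/eqP: xv; rewrite mul0r mulf_eq0 (negbTE xy) => /eqP.
  subst v; rewrite eqxx orbF in uv.
  apply: (@fin2 x 0 u 0 nzQ uv xv) => t tn.
  by move/eqP; rewrite mul0r mulf_eq0 (negbTE xy) expf_eq0 (negbTE tn) andbF.
- move: iX; rewrite /incid /tx /ty /tz /= ?mulr0 ?addr0 ?add0r mulr1 => b00; subst b0.
  move: i1 i2 nc; rewrite !phiE !fr0 /incid /tx /ty /tz /=.
  rewrite ?mul0r ?addr0 ?add0r => i1 i2 nc.
  have xn : x != 0.
    apply/eqP => x0; subst x; rewrite eqxx /= in xy.
    move/eqP: i1; rewrite mulr0 add0r mulf_eq0 (negbTE xy) orbF !expf_eq0 => /andP[_ /eqP a0].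
    subst a; move/eqP: i2; rewrite !fr0 mul0r addr0.
    have cn : c != 0 by move/nz3: nzl; rewrite !eqxx.
    by rewrite mulf_eq0 (negbTE xy) orbF !expf_eq0 (negbTE cn) !andbF.
  have un : u != 0.
    apply/eqP => u0; subst u; rewrite eqxx /= in uv.
    by move/eqP: xv; rewrite mulr0 mulf_eq0 (negbTE xn) (negbTE uv).
  apply: (fin2 nzQ un xv) => t tn xt.
  have E1 : c ^+ q * t + a ^+ q * t ^+ q = 0.
    apply: (mulfI xn); rewrite mulr0.
    transitivity (c ^+ q * t * x + a ^+ q * (x * t ^+ q)); first by ring.
    rewrite xt; transitivity ((c ^+ q * x + a ^+ q * y) * t); first by ring.
    by rewrite i1 mul0r.
  have E2 : c ^+ q ^+ q * t ^+ q + a ^+ q ^+ q * t ^+ q ^+ q = 0.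
    by move: (congr1 (fun a => a ^+ q) E1); rewrite frD !exprMn fr0.
  have E3 : c * t ^+ q ^+ q + a * t = 0.
    by move: (congr1 (fun a => a ^+ q) E2); rewrite frD !exprMn !fr3 fr0.
  apply: nc; exists (t, t ^+ q, t ^+ q ^+ q); split.
    by apply/nz3; rewrite tn.
  rewrite /incid /tx /ty /tz /=.
  split; first by apply: (eq_trans _ E3); ring.
  split; first by apply: (eq_trans _ E1); ring.
  by apply: (eq_trans _ E2); ring.
Qed.

Lemma part1_bwd Q : mTminus q (phi q (T F)) Q -> PrFigMinusT q (phi q (T F)) Q.
Proof.
have -> : phi q (T F) = (1, 0, 0) by rewrite /T phiE fr0 fr1.
case: Q => [[u v] w] [nzQ [iQ [nS1 nY]]].
move: iQ; rewrite /incid /mT /tx /ty /tz /= !mul0r !add0r mul1r => w0; subst w.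
have vn : v != 0.
  apply/eqP => v0; subst v; apply: nY; split => //; split; first by apply/nz3; rewrite oner_neq0.
  have un : u != 0 by move/nz3: nzQ; rewrite !eqxx !orbF.
  exists u^-1; split; first by rewrite invr_eq0.
  by rewrite /smul /tx /ty /tz /= mulVf // mulr0.
have [cc ccE] : exists cc : F, cc = (- (u / v)) ^+ q by eexists.
have c2E : cc ^+ q ^+ q = - (u / v) by rewrite ccE fr3.
exists (u, v, - (cc ^+ q * u)); split.
  right; split; first by apply/nz3; rewrite vn orbT.
  exists (0, 1, cc); split.
    split; first by apply/nz3; rewrite oner_neq0 orbT.
    case=> [[[r1 r2] r3] [nzR]]; rewrite !phiE !fr0 !fr1 /incid /tx /ty /tz /=.
    move=> [h1 [h2 h3]].
    have hN : r1 * (1 + cc * cc ^+ q * cc ^+ q ^+ q) = 0.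
      transitivity ((1 * r1 + cc ^+ q ^+ q * r2 + 0 * r3) - cc ^+ q ^+ q * (0 * r1 + 1 * r2 + cc * r3)
        + cc ^+ q ^+ q * cc * (cc ^+ q * r1 + 0 * r2 + 1 * r3)); first by ring.
      by rewrite h1 h2 h3; ring.
    have [r10|r1n] := eqVneq r1 0.
      subst r1; move: h2 h1; rewrite !mulr0 !mul0r !add0r !mul1r => r30; subst r3.
      rewrite mulr0 addr0 => r20; subst r2.
      by case: nzR.
    move/eqP: hN; rewrite mulf_eq0 (negbTE r1n) /= addr_eq0 => /eqP hN.
    set e := u / v.
    have eq1 : e ^+ q = - cc by rewrite -[e]opprK -c2E frN fr3.
    have eq2 : e ^+ q ^+ q = - cc ^+ q by rewrite eq1 frN.
    have [s [sn sE]] : exists s : F, s != 0 /\ s ^+ q = e * s.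
      apply: H90; rewrite eq2 eq1 -[e]opprK -c2E.
      transitivity (- (cc * cc ^+ q * cc ^+ q ^+ q)); first by ring.
      by rewrite -hN.
    have un : u != 0.
      apply/eqP => u0; move: hN; rewrite ccE u0 mul0r oppr0 fr0 !mul0r oppr0 => /eqP.
      by rewrite oner_eq0.
    apply: nS1; exists s^-1; split; first by rewrite invr_eq0.
    split => //; split; first by apply/nz3; rewrite invr_eq0 sn.
    exists (s * u)^-1; split; first by rewrite invr_eq0 mulf_neq0.
    rewrite /smul /tx /ty /tz /= mulr0 exprVn sE /e; congr (_, _, _); field.
    by rewrite sn un.
    by rewrite sn un vn.
  rewrite !phiE !fr0 !fr1 /incid /tx /ty /tz /=.
  split; first by ring.
  split; first by ring.
  rewrite c2E; field; done.
split.
  case=> _ [_ [c [cn]]]; rewrite /smul /tx /ty /tz /= => -[_ e _].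
  by move/eqP: e; rewrite eq_sym mulf_eq0 (negbTE cn) (negbTE vn).
split => //; split; first by rewrite /incid /tx /ty /tz /=; ring.
exists (v, - u, 0); split; first by apply/nz3; rewrite vn.
rewrite /incid /tx /ty /tz /T /=.
split; first by ring.
split; first by ring.
by ring.
Qed.

Lemma part2_bwd Q : mTminus q (phi q (phi q (T F))) Q ->
  PrFigMinusT q (phi q (phi q (T F))) Q.
Proof.
have -> : phi q (phi q (T F)) = (0, 1, 0) by rewrite /T !phiE !fr0 !fr1.
case: Q => [[u v] w] [nzQ [iQ [nS1 nY]]].
move: iQ; rewrite /incid /mT /tx /ty /tz /= !mul0r !add0r mul1r => w0; subst w.
have un : u != 0.
  apply/eqP => u0; subst u; apply: nY; split => //; split; first by apply/nz3; rewrite oner_neq0 orbT.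
  have vn : v != 0 by move/nz3: nzQ; rewrite !eqxx !orbF.
  exists v^-1; split; first by rewrite invr_eq0.
  by rewrite /smul /tx /ty /tz /= mulVf // mulr0.
have [cc ccE] : exists cc : F, cc = (- (v / u)) ^+ q ^+ q by eexists.
have c1E : cc ^+ q = - (v / u) by rewrite ccE fr3.
exists (u, v, - (cc ^+ q ^+ q * v)); split.
  right; split; first by apply/nz3; rewrite un.
  exists (1, 0, cc); split.
    split; first by apply/nz3; rewrite oner_neq0.
    case=> [[[r1 r2] r3] [nzR]]; rewrite !phiE !fr0 !fr1 /incid /tx /ty /tz /=.
    move=> [h1 [h2 h3]].
    have hN : r3 * (1 + cc * cc ^+ q * cc ^+ q ^+ q) = 0.
      transitivity ((0 * r1 + cc ^+ q ^+ q * r2 + 1 * r3) - cc ^+ q ^+ q * (cc ^+ q * r1 + 1 * r2 + 0 * r3)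
        + cc ^+ q ^+ q * cc ^+ q * (1 * r1 + 0 * r2 + cc * r3)); first by ring.
      by rewrite h1 h2 h3; ring.
    have [r30|r3n] := eqVneq r3 0.
      subst r3; move: h1; rewrite !mulr0 !mul0r !addr0 !mul1r => r10; subst r1.
      move: h2; rewrite !mulr0 ?addr0 ?add0r !mul1r => r20; subst r2.
      by case: nzR.
    move/eqP: hN; rewrite mulf_eq0 (negbTE r3n) /= addr_eq0 => /eqP hN.
    set e := v / u.
    have eq1 : e ^+ q = - cc ^+ q ^+ q by rewrite -[e]opprK -c1E frN.
    have eq2 : e ^+ q ^+ q = - cc by rewrite eq1 frN fr3.
    have [s [sn sE]] : exists s : F, s != 0 /\ s ^+ q = e * s.
      apply: H90; rewrite eq2 eq1 -[e]opprK -c1E.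
      transitivity (- (cc * cc ^+ q * cc ^+ q ^+ q)); first by ring.
      by rewrite -hN.
    apply: nS1; exists s; split => //.
    split => //; split; first by apply/nz3; rewrite sn.
    exists (s / u); split; first by rewrite mulf_neq0 ?invr_eq0.
    rewrite /smul /tx /ty /tz /= mulr0 sE /e; congr (_, _, _); field.
    by rewrite un.
    by rewrite un.
  rewrite !phiE !fr0 !fr1 /incid /tx /ty /tz /=.
  split; first by ring.
  split; first by rewrite c1E; field.
  by ring.
split.
  case=> _ [_ [c [cn]]]; rewrite /smul /tx /ty /tz /= => -[e _ _].
  by move/eqP: e; rewrite eq_sym mulf_eq0 (negbTE cn) (negbTE un).
split => //; split; first by rewrite /incid /tx /ty /tz /=; ring.
exists (v, - u, 0); split; first by apply/nz3; rewrite oppr_eq0 un orbT.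
rewrite /incid /tx /ty /tz /T /=.
split; first by ring.
split; first by ring.
by ring.
Qed.
End Alg.

Theorem theorem6p3 (F : finFieldType) (p k : nat) :
  prime p -> (0 < k)%N -> #|F| = ((p ^ k) ^ 3)%N ->
  let q := (p ^ k)%N in
  (forall Q : trip F,
     PrFigMinusT q (phi q (T F)) Q <-> mTminus q (phi q (T F)) Q) /\
  (forall Q : trip F,
     PrFigMinusT q (phi q (phi q (T F))) Q <->
     mTminus q (phi q (phi q (T F))) Q).
Proof.
move=> pp k0 cF q.
have Hq : (1 < q)%N by rewrite /q -{1}(expn0 p) ltn_exp2l ?prime_gt1.
have card : #|F| = (q * q * q)%N by rewrite cF /q; rewrite !expnS expn0 muln1 mulnA.
have chF : p \in [pchar F] by apply: (@card_finPcharP F p (k * 3)) => //; rewrite expnM.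
have nq : [pchar F].-nat q by rewrite /q pnatX (pnatE _ pp) chF.
have frD : forall x y : F, (x + y) ^+ q = x ^+ q + y ^+ q by move=> x y; apply: exprDn_pchar.
have frN : forall x : F, (- x) ^+ q = - (x ^+ q) by move=> x; apply: exprNn_pchar.
have fr3 : forall x : F, ((x ^+ q) ^+ q) ^+ q = x by move=> x; rewrite -!exprM mulnA -card expf_card.
split=> Q; split.
- by apply: part1_fwd.
- by apply: part1_bwd.
- by apply: part2_fwd.
- by apply: part2_bwd.
Qed.
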